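(* Let $k\geq 2$ be an integer and let $G$ be an $(\infty,k)$-path forcer with tip vertex $w$. Then $G$ has an $(\infty,k)$-bounded linear forest decomposition, and every $(\infty,k)$-bounded linear forest decomposition $(F_\infty,F_k)$ of $G$ satisfies $d_{F_\infty}(w)=0$ and $w$ is the last vertex of a path of length $k-1$ in $F_k$ (namely, all edges of the path $P$ belong to $F_k$).
   Context: All graphs are loopless but may have parallel edges. A linear forest is a graph each of whose components is a path; it is $k$-bounded if each component has at most $k$ edges, and $\infty$-bounded means any linear forest. An $(\infty,k)$-bounded linear forest decomposition of $G$ is a pair $(F_\infty,F_k)$ of spanning subgraphs whose edge sets partition $E(G)$, with $F_\infty$ a linear forest and $F_k$ a $k$-bounded linear forest. For integers $K>L\geq 2$, a short $(K,L)$-forcer is obtained from a path $v_0v_1\dots v_K$ by doubling every edge $v_iv_{i+1}$, $0\le i\le K-1$, except those with $i = K-1-\mu(L+1)$ for some integer $\mu\in\{0,\ldots,\lfloor (K-1)/(L+1)\rfloor\}$; $v_K$ is its tip vertex. An $(\infty,k)$-path forcer is obtained from a path $P=p_0p_1\dots p_{k-1}$ of length $k-1$ by identifying each of the vertices $p_0,\dots,p_{k-2}$ with the tip vertices of two new disjoint short $(k+1,k)$-forcers; its tip vertex is $w=p_{k-1}$, the unique vertex of degree $1$. *)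

(* Defs.v *)
From mathcomp Require Import all_boot.
Set Implicit Arguments. Unset Strict Implicit. Unset Printing Implicit Defensive.

(* Multigraphs (parallel edges allowed) given by a number of vertices n   *)
(* (vertex type 'I_n, vertices identified with nat labels 0..n-1) and a   *)
(* list es of edges, each a pair of endpoint labels; the edge type is     *)
(* 'I_(size es), so parallel edges are distinct edges.                    *)
(* A spanning subgraph is given by its edge set F : {set 'I_(size es)}.   *)

Definition ends (es : seq (nat * nat)) (e : 'I_(size es)) : nat * nat :=
  nth (0, 0) es e.

Definition joinsp (p : nat * nat) (x y : nat) : bool :=
  (p == (x, y)) || (p == (y, x)).

Definition incident (es : seq (nat * nat)) (e : 'I_(size es)) (x : nat) : bool :=
  ((ends e).1 == x) || ((ends e).2 == x).

Definition adjF (n : nat) (es : seq (nat * nat)) (F : {set 'I_(size es)}) :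
  rel 'I_n := fun x y => [exists e in F, joinsp (ends e) x y].

Definition comp (n : nat) (es : seq (nat * nat)) (F : {set 'I_(size es)})
  (x : 'I_n) : {set 'I_n} := [set y | connect (@adjF n es F) x y].

Definition comp_edges (n : nat) (es : seq (nat * nat)) (F : {set 'I_(size es)})
  (x : 'I_n) : {set 'I_(size es)} :=
  [set e in F | [exists y in comp F x, incident e (val y)]].

(* the graph with vertex set C and edge set D is a path
   v_0 v_1 ... v_m (distinct vertices) with edges e_1 ... e_m,
   e_i joining v_{i-1} and v_i *)
Definition is_path_graph (n : nat) (es : seq (nat * nat))
  (C : {set 'I_n}) (D : {set 'I_(size es)}) : Prop :=
  exists (s : seq 'I_n) (t : seq 'I_(size es)),
    [/\ uniq s, C = [set v in s], uniq t, D = [set e in t] &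
        size t = (size s).-1] /\
        forall i, i < size t ->
          joinsp (nth (0, 0) [seq ends e | e <- t] i)
                 (nth 0 [seq val v | v <- s] i)
                 (nth 0 [seq val v | v <- s] i.+1).

Definition linear_forest (n : nat) (es : seq (nat * nat))
  (F : {set 'I_(size es)}) : Prop :=
  forall x : 'I_n, is_path_graph (comp F x) (comp_edges F x).

Definition bounded_linear_forest (n : nat) (es : seq (nat * nat)) (k : nat)
  (F : {set 'I_(size es)}) : Prop :=
  linear_forest n F /\ forall x : 'I_n, #|comp_edges F x| <= k.

Definition inf_k_decomposition (n : nat) (es : seq (nat * nat)) (k : nat)
  (Finf Fk : {set 'I_(size es)}) : Prop :=
  [/\ Finf :|: Fk = setT, Finf :&: Fk = set0,
      linear_forest n Finf & bounded_linear_forest n k Fk].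

(* degree of vertex x in the spanning subgraph F (graphs are loopless) *)
Definition degF (es : seq (nat * nat)) (F : {set 'I_(size es)}) (x : nat) : nat :=
  #|[set e in F | incident e x]|.

(* Short (K,L)-forcer: path v_0 ... v_K, every edge v_i v_{i+1} doubled   *)
(* except for i = K-1-mu(L+1), mu in {0,..,floor((K-1)/(L+1))}.           *)
(* lab i is the global label of v_i (so identification is by labelling).  *)
Definition sf_single (K L i : nat) : bool :=
  has (fun mu => i == K.-1 - mu * L.+1) (iota 0 ((K.-1) %/ L.+1).+1).

Definition short_forcer_edges (K L : nat) (lab : nat -> nat) : seq (nat * nat) :=
  flatten [seq (if sf_single K L i then [:: (lab i, lab i.+1)]
                else [:: (lab i, lab i.+1); (lab i, lab i.+1)]) | i <- iota 0 K].

(* (oo,k)-path forcer: path P = p_0 ... p_{k-1} with p_j labelled j; for  *)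
(* each j <= k-2 and copy c in {0,1}, a short (k+1,k)-forcer whose tip    *)
(* v_{k+1} is p_j and whose other vertices v_0..v_k get fresh labels      *)
(* k + (2j+c)(k+1) + i.  Tip vertex w = p_{k-1} = k-1.                     *)
Definition pf_nverts (k : nat) : nat := k + (k.-1).*2 * k.+1.

Definition pf_label (k j c i : nat) : nat :=
  if i == k.+1 then j else k + (j.*2 + c) * k.+1 + i.

Definition pf_P_edges (k : nat) : seq (nat * nat) :=
  [seq (j, j.+1) | j <- iota 0 k.-1].

Definition pf_edges (k : nat) : seq (nat * nat) :=
  pf_P_edges k ++
  flatten [seq short_forcer_edges k.+1 k (pf_label k j c)
          | j <- iota 0 k.-1, c <- iota 0 2].

Definition pf_tip (k : nat) : nat := k.-1.

(* Main.v *)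
Require Import Defs.
From mathcomp Require Import all_boot.
From mathcomp Require Import zify.
Set Implicit Arguments. Unset Strict Implicit. Unset Printing Implicit Defensive.


Lemma sf_singleE k i : sf_single k.+1 k i = (i == k).
Proof.
rewrite /sf_single /= divn_small ?ltnSn //= mul0n subn0 orbF //.
Qed.

Lemma nth_sf_gen (q : nat -> nat * nat) (n a t : nat) r :
  t = a + n -> r <= n.*2 ->
  nth (0,0) (flatten [seq (if i == t then [:: q i] else [:: q i; q i]) | i <- iota a n.+1]) r
  = q (a + r %/ 2) /\
  size (flatten [seq (if i == t then [:: q i] else [:: q i; q i]) | i <- iota a n.+1]) = n.*2.+1.
Proof.
elim: n a r => [|n IH] a r ht hr.
  rewrite ht addn0 /= eqxx /=. have -> : r = 0 by lia. by rewrite addn0.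
have e : a == t = false by apply/eqP; lia.
rewrite /=. rewrite e /=.
have [|hr2] := ltnP r 2.
  case: r hr => [|[|r]] //= _ _; rewrite ?addn0 //; split => //;
  by have [_ ->] := IH a.+1 0 ltac:(lia) ltac:(lia).
have [h1 h2] := IH a.+1 (r - 2) ltac:(lia) ltac:(lia).
case: r hr hr2 h1 h2 => [|[|r]] //= hr _ h1 h2.
rewrite subn2 /= in h1. rewrite h1 h2; split; [congr q; lia | lia].
Qed.

Lemma nth_sf k j c r : r <= k.*2 ->
  nth (0,0) (short_forcer_edges k.+1 k (pf_label k j c)) r =
    (pf_label k j c (r %/ 2), pf_label k j c (r %/ 2).+1) /\
  size (short_forcer_edges k.+1 k (pf_label k j c)) = k.*2.+1.
Proof.
move=> hr; rewrite /short_forcer_edges.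
rewrite (eq_map (g := fun i => if i == k then [:: (pf_label k j c i, pf_label k j c i.+1)]
   else [:: (pf_label k j c i, pf_label k j c i.+1); (pf_label k j c i, pf_label k j c i.+1)])); last first.
  by move=> i; rewrite sf_singleE.
have := @nth_sf_gen (fun i => (pf_label k j c i, pf_label k j c i.+1)) k 0 k r (erefl _) hr.
by rewrite add0n.
Qed.

Lemma nth_flat_const (T : Type) (x0 : T) (ss : seq (seq T)) m b r :
  all (fun s => size s == m) ss -> r < m -> b < size ss ->
  nth x0 (flatten ss) (b * m + r) = nth x0 (nth [::] ss b) r.
Proof.
elim: ss b => [|s ss IH] b //= /andP[/eqP hs hall] hr hb.
rewrite nth_cat hs; case: b hb => [|b] hb.
  by rewrite mul0n add0n hr.
have -> : (b.+1 * m + r < m) = false by apply/negbTE; rewrite -leqNgt mulSn; lia.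
have -> : b.+1 * m + r - m = b * m + r by rewrite mulSn; lia.
by apply: IH.
Qed.

Lemma nth_allp (f : nat -> nat -> seq (nat * nat)) N a b : b < N.*2 ->
  nth [::] [seq f j c | j <- iota a N, c <- iota 0 2] b = f (a + b %/ 2) (b %% 2).
Proof.
elim: N a b => [|N IH] a b //= hb.
case: b hb => [|[|b]] hb /=; rewrite ?addn0 //.
rewrite IH; last by lia.
congr f; lia.
Qed.

Lemma size_flat_const (T : Type) (ss : seq (seq T)) m :
  all (fun s => size s == m) ss -> size (flatten ss) = size ss * m.
Proof. by elim: ss => [|s ss IH] //= /andP[/eqP hs /IH h]; rewrite size_cat hs h mulSn. Qed.

Definition lab k b i := k + b * k.+1 + i.

Section PF.
Variable k : nat.
Hypothesis hk : 2 <= k.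
Local Notation N := k.-1.
Local Notation m := k.*2.+1.
Local Notation es := (pf_edges k).
Local Notation allp := [seq short_forcer_edges k.+1 k (pf_label k j c) | j <- iota 0 k.-1, c <- iota 0 2].

Lemma allp_size : all (fun s => size s == m) allp.
Proof.
apply/allP => s /allpairsP [[j c] [_ _ ->]].
by have [_ ->] := @nth_sf k j c 0 (leq0n _).
Qed.

Lemma size_es : size es = N + N.*2 * m.
Proof.
rewrite /pf_edges size_cat /pf_P_edges size_map size_iota.
by rewrite (size_flat_const allp_size) size_allpairs !size_iota muln2.
Qed.

Lemma ends_gen b r : b < N.*2 -> r < m ->
  nth (0,0) es (N + b * m + r) =
   (pf_label k (b %/ 2) (b %% 2) (r %/ 2), pf_label k (b %/ 2) (b %% 2) (r %/ 2).+1).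
Proof.
move=> hb hr.
rewrite /pf_edges nth_cat /pf_P_edges size_map size_iota.
have -> : (N + b * m + r < N) = false by lia.
have -> : N + b * m + r - N = b * m + r by lia.
rewrite nth_flat_const //; last by rewrite size_allpairs !size_iota; lia.
2: exact: allp_size.
rewrite nth_allp // add0n.
by have [-> _] := @nth_sf k (b %/ 2) (b %% 2) r ltac:(lia).
Qed.

Lemma ends_D b q c : b < N.*2 -> q < k -> c < 2 ->
  nth (0,0) es (N + b * m + (q.*2 + c)) = (lab k b q, lab k b q.+1).
Proof.
move=> hb hq hc; rewrite ends_gen; [|done|lia].
have -> : (q.*2 + c) %/ 2 = q by lia.
rewrite /pf_label /lab.
have -> : (q == k.+1) = false by apply/eqP; lia.
have -> : (q.+1 == k.+1) = false by apply/eqP; lia.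
have -> : (b %/ 2).*2 + b %% 2 = b by lia.
done.
Qed.

Lemma ends_S b : b < N.*2 ->
  nth (0,0) es (N + b * m + k.*2) = (lab k b k, b %/ 2).
Proof.
move=> hb; rewrite ends_gen; [|done|lia].
have -> : k.*2 %/ 2 = k by lia.
rewrite /pf_label /lab eqxx.
have -> : (k == k.+1) = false by apply/eqP; lia.
have -> : (b %/ 2).*2 + b %% 2 = b by lia.
done.
Qed.

Lemma ends_P e : e < N -> nth (0,0) es e = (e, e.+1).
Proof.
move=> he; rewrite /pf_edges nth_cat /pf_P_edges size_map size_iota he.
by rewrite (nth_map 0) ?size_iota // nth_iota.
Qed.

End PF.

Lemma joinsp_sym p x y : joinsp p x y = joinsp p y x.
Proof. by rewrite /joinsp orbC. Qed.

Lemma adjF_sym n es (F : {set 'I_(size es)}) : symmetric (@adjF n es F).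
Proof.
move=> x y; apply/existsP/existsP => -[e /andP[he hj]]; exists e;
by rewrite he joinsp_sym.
Qed.

Lemma joinsp_inc p a b c : joinsp p a b -> (p.1 == c) || (p.2 == c) -> c = a \/ c = b.
Proof.
case: p => u v; rewrite /joinsp /=.
by case/orP => /eqP [-> ->] /orP [] /eqP ->; auto.
Qed.

Lemma joinsp_2 p a b c d : joinsp p a b -> joinsp p c d -> (a = c /\ b = d) \/ (a = d /\ b = c).
Proof.
case: p => u v; rewrite /joinsp /=.
by case/orP => /eqP [-> ->] /orP [] /eqP [-> ->]; auto.
Qed.

Lemma lf_info n es (F : {set 'I_(size es)}) (x : 'I_n) : linear_forest n F ->
 exists (sv : nat -> nat) (t : seq 'I_(size es)) (len : nat), [/\ uniq t, size t = len,
   (forall i j, i <= len -> j <= len -> sv i = sv j -> i = j),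
   (exists2 p, p <= len & sv p = x) &
   forall e, e \in F -> incident e x -> e \in t /\ joinsp (ends e) (sv (index e t)) (sv (index e t).+1)].
Proof.
move=> /(_ x) [s [t [[us hC ut hD hsz] hj]]].
have xc : x \in Defs.comp F x by rewrite /Defs.comp inE connect0.
have xs : x \in s by move: xc; rewrite hC inE.
have s0 : 0 < size s by case: (s) xs.
have hs1 : size s = (size t).+1 by rewrite hsz prednK.
exists (fun i => nth 0 [seq val v | v <- s] i), t, (size t); split => //.
- move=> i j hi hj' /eqP; rewrite nth_uniq;
    [by move/eqP | rewrite size_map hs1; lia | rewrite size_map hs1; lia | by rewrite (map_inj_uniq val_inj)].
- exists (index x s); first by rewrite -ltnS -hs1 index_mem.
  by rewrite (nth_map x) ?index_mem // nth_index.
- move=> e he hi.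
  have ec : e \in comp_edges F x.
    by rewrite /comp_edges inE he; apply/existsP; exists x; rewrite xc.
  have et : e \in t by move: ec; rewrite hD inE.
  split => //.
  have := hj (index e t); rewrite index_mem et => /(_ isT).
  by rewrite (nth_map e) ?index_mem // nth_index.
Qed.



Lemma lf_deg3 n es (F : {set 'I_(size es)}) (x : 'I_n) e1 e2 e3 :
  linear_forest n F -> e1 \in F -> e2 \in F -> e3 \in F ->
  incident e1 x -> incident e2 x -> incident e3 x ->
  e1 != e2 -> e1 != e3 -> e2 != e3 -> False.
Proof.
move=> /(lf_info x) [sv [t [len [ut hsz hinj [p hp hx] he]]]] h1 h2 h3 i1 i2 i3 d12 d13 d23.
have pos : forall e, e \in F -> incident e x ->
   e \in t /\ (index e t = p \/ (index e t).+1 = p).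
  move=> e hF hi; have [et hj] := he e hF hi.
  have il : index e t < len by rewrite -hsz index_mem.
  split => //.
  have := joinsp_inc hj hi; rewrite -hx => -[] hq.
    by left; exact: (hinj _ _ (ltnW il) hp (esym hq)).
  by right; exact: (hinj _ _ il hp (esym hq)).
have [t1 q1] := pos _ h1 i1.
have [t2 q2] := pos _ h2 i2.
have [t3 q3] := pos _ h3 i3.
have dd : forall a b, a \in t -> b \in t -> a != b -> index a t <> index b t.
  move=> a b ha hb hab hi; move/eqP: hab; apply.
  by rewrite -(nth_index a ha) hi nth_index.
have key : forall a b, a \in t -> b \in t -> a != b ->
   (index a t = p \/ (index a t).+1 = p) -> (index b t = p \/ (index b t).+1 = p) ->
   (index a t = p /\ (index b t).+1 = p) \/ ((index a t).+1 = p /\ index b t = p).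
  move=> a b ha hb hab qa qb; have := dd a b ha hb hab.
  case: qa => qa; case: qb => qb hne.
  - by exfalso; apply: hne; rewrite qa qb.
  - by left.
  - by right.
  - by exfalso; apply: hne; apply: succn_inj; rewrite qa qb.
have := key _ _ t1 t2 d12 q1 q2; have := key _ _ t1 t3 d13 q1 q3; have := key _ _ t2 t3 d23 q2 q3.
clear; timeout 10 lia.
Qed.

Lemma lf_par n es (F : {set 'I_(size es)}) (x : 'I_n) e1 e2 :
  linear_forest n F -> e1 \in F -> e2 \in F -> ends e1 = ends e2 ->
  incident e1 x -> e1 != e2 -> False.
Proof.
move=> /(lf_info x) [sv [t [len [ut hsz hinj [p hp hx] he]]]] h1 h2 hee i1 d12.
have i2 : incident e2 x by rewrite /incident -hee.
have [t1 j1] := he _ h1 i1; have [t2 j2] := he _ h2 i2.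
have l1 : index e1 t < len by rewrite -hsz index_mem.
have l2 : index e2 t < len by rewrite -hsz index_mem.
rewrite hee in j1.
have hi : index e1 t = index e2 t.
  case: (joinsp_2 j1 j2) => -[a b].
    exact: (hinj _ _ (ltnW l1) (ltnW l2) a).
  have h1' := hinj _ _ (ltnW l1) l2 a; have h2' := hinj _ _ l1 (ltnW l2) b.
  move: h1' h2'; clear; lia.
move/eqP: d12; apply.
by rewrite -(nth_index e1 t1) hi nth_index.
Qed.


Lemma joinsp_l p a b : joinsp p a b -> (p.1 == a) || (p.2 == a).
Proof. by case: p => u v; rewrite /joinsp /= => /orP [] /eqP [-> ->]; rewrite eqxx ?orbT. Qed.

Lemma path_comp n es (pF : pred nat) (x : 'I_n) (e0 : 'I_(size es)) (len : nat) (sv te : nat -> nat) :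
  (forall i, i <= len -> sv i < n) ->
  (forall i, i < len -> te i < size es) ->
  (forall i j, i <= len -> j <= len -> sv i = sv j -> i = j) ->
  (forall i j, i < len -> j < len -> te i = te j -> i = j) ->
  (exists2 i, i <= len & sv i = x) ->
  (forall i, i < len -> pF (te i)) ->
  (forall i, i < len -> joinsp (nth (0,0) es (te i)) (sv i) (sv i.+1)) ->
  (forall e i, e < size es -> pF e -> i <= len ->
      ((nth (0,0) es e).1 == sv i) || ((nth (0,0) es e).2 == sv i) ->
      exists2 i', i' < len & te i' = e) ->
  is_path_graph (Defs.comp [set e : 'I_(size es) | pF e] x)
                (comp_edges [set e : 'I_(size es) | pF e] x)
  /\ #|comp_edges [set e : 'I_(size es) | pF e] x| = len.
Proof.
move=> hsv hte isv ite [i0 hi0 hx] hpF hjn hcl.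
set F := [set e : 'I_(size es) | pF e].
pose v i := insubd x (sv i).
pose t := [seq insubd e0 (te i) | i <- iota 0 len].
pose s := [seq v i | i <- iota 0 len.+1].
have vs : forall i, i <= len -> val (v i) = sv i.
  by move=> i hi; rewrite /v val_insubd hsv.
have vt : forall i, i < len -> val (insubd e0 (te i)) = te i.
  by move=> i hi; rewrite val_insubd hte.
have mem_s : forall w, w \in s -> exists2 i, i <= len & w = v i.
  by move=> w /mapP [i]; rewrite mem_iota add0n => /andP [_ hi] ->; exists i.
have vin : forall i, i <= len -> v i \in s.
  by move=> i hi; apply/mapP; exists i => //; rewrite mem_iota.
have mem_t : forall e, e \in t -> exists2 i, i < len & e = insubd e0 (te i).
  by move=> w /mapP [i]; rewrite mem_iota add0n => /andP [_ hi] ->; exists i.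
have tin : forall i, i < len -> insubd e0 (te i) \in t.
  by move=> i hi; apply/mapP; exists i => //; rewrite mem_iota.
have endsT : forall i, i < len -> ends (insubd e0 (te i)) = nth (0,0) es (te i).
  by move=> i hi; rewrite /ends vt.
have xv : x = v i0 by apply: val_inj; rewrite vs.
have adj : forall i, i < len -> adjF F (v i) (v i.+1).
  move=> i hi; apply/existsP; exists (insubd e0 (te i)).
  rewrite /F inE vt // hpF //= endsT // vs ?(ltnW hi) // vs //; exact: hjn.
have con0 : forall i, i <= len -> connect (adjF F) (v 0) (v i).
  elim=> [|i IH] hi; first exact: connect0.
  apply: connect_trans (IH (ltnW hi)) _; exact: connect1 (adj _ hi).
have csym := sym_connect_sym (@adjF_sym n es F).
have clo : forall y z, adjF F y z -> y \in s -> z \in s.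
  move=> y z /existsP [e /andP []]; rewrite inE => he hj /mem_s [i hi hy].
  have [i' hi' hte'] : exists2 i', i' < len & te i' = e.
    apply: (hcl e i) => //; rewrite -(vs _ hi) -hy; exact: joinsp_l hj.
  have hj' := hjn _ hi'; rewrite hte' -/(ends e) in hj'.
  case: (joinsp_2 hj hj') => -[_ hz].
    have -> : z = v i'.+1 by apply: val_inj; rewrite vs.
    exact: vin.
  have -> : z = v i' by apply: val_inj; rewrite vs // ltnW.
  by apply: vin; rewrite ltnW.
have compE : Defs.comp F x = [set w in s].
  apply/setP => w; rewrite !inE; apply/idP/idP.
    move=> hc; have cl := intro_closed csym clo.
    by have := closed_connect cl hc; rewrite {1}xv vin // => <-.
  case/mem_s => i hi ->; rewrite xv.
  apply: connect_trans (con0 _ hi); by rewrite csym con0.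
have edgesE : comp_edges F x = [set e in t].
  apply/setP => e; rewrite !inE; apply/idP/idP.
    case/andP => he /existsP [y /andP []]; rewrite compE inE => /mem_s [i hi ->] hinc.
    have [i' hi' hte'] : exists2 i', i' < len & te i' = e.
      by apply: (hcl e i) => //; rewrite -(vs _ hi).
    have -> : e = insubd e0 (te i') by apply: val_inj; rewrite vt.
    exact: tin.
  case/mem_t => i hi ->; apply/andP; split; first by rewrite (vt _ hi); exact: hpF.
  apply/existsP; exists (v i); apply/andP; split.
    rewrite compE inE; apply: vin; exact: ltnW.
  rewrite /incident (endsT _ hi) (vs _ (ltnW hi)); exact: joinsp_l (hjn _ hi).
have ut : uniq t.
  rewrite map_inj_in_uniq ?iota_uniq // => i j; rewrite !mem_iota !add0n => /andP [_ hi] /andP [_ hj] h.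
  by apply: ite => //; rewrite -vt // h vt.
split; last by rewrite edgesE cardsE; move/card_uniqP: ut ->; rewrite size_map size_iota.
exists s, t; split.
  split => //.
  - rewrite map_inj_in_uniq ?iota_uniq // => i j; rewrite !mem_iota !add0n => /andP [_ hi] /andP [_ hj] h.
    by apply: isv => //; rewrite -vs // h vs.
  - by rewrite !size_map !size_iota.
move=> i; rewrite size_map size_iota => hi.
have h1 : nth (0,0) [seq ends e | e <- t] i = nth (0,0) es (te i).
  rewrite (nth_map e0); last by rewrite size_map size_iota.
  rewrite /t (nth_map 0); last by rewrite size_iota.
  by rewrite nth_iota // add0n (endsT _ hi).
have h2 : forall j, j <= len -> nth 0 [seq val w | w <- s] j = sv j.
  move=> j hj; rewrite (nth_map x); last by rewrite size_map size_iota.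
  rewrite /s (nth_map 0); last by rewrite size_iota.
  by rewrite nth_iota // add0n (vs _ hj).
rewrite h1 (h2 _ (ltnW hi)) (h2 _ hi); exact: hjn.
Qed.


Section Conc.
Variable k : nat.
Hypothesis hk : 2 <= k.
Local Notation N := k.-1.
Local Notation m := k.*2.+1.
Local Notation es := (pf_edges k).
Local Notation n := (pf_nverts k).

Definition pK (e : nat) : bool :=
  (e < N) || (((e - N) %% m < k.*2) && ((e - N) %% m %% 2 == 0)).

Lemma lab_inj b b' i i' : i <= k -> i' <= k -> lab k b i = lab k b' i' -> b = b' /\ i = i'.
Proof.
rewrite /lab => hi hi' h.
have h' : b * k.+1 + i = b' * k.+1 + i' by lia.
have e1 := congr1 (fun z => z %/ k.+1) h'.
rewrite /= !divnMDl // !divn_small ?ltnS // !addn0 in e1.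
subst b'; split => //; lia.
Qed.

Lemma lab_ge b i : k <= lab k b i.
Proof. rewrite /lab; lia. Qed.

Lemma lab_lt b i : b < N.*2 -> i <= k -> lab k b i < n.
Proof.
move=> hb hi; rewrite /lab /pf_nverts.
have : b.+1 * k.+1 <= N.*2 * k.+1 by rewrite leq_mul2r hb orbT.
rewrite mulSn; lia.
Qed.

Lemma blk_inj b b' r r' : r < m -> r' < m -> N + b * m + r = N + b' * m + r' -> b = b' /\ r = r'.
Proof.
move=> hr hr' h.
have h' : b * m + r = b' * m + r' by lia.
have e1 := congr1 (fun z => z %/ m) h'.
rewrite /= !divnMDl // !divn_small // !addn0 in e1.
subst b'; split => //; lia.
Qed.

Lemma blk_lt b r : b < N.*2 -> r < m -> N + b * m + r < size es.
Proof.
move=> hb hr; rewrite size_es //.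
have : b.+1 * m <= N.*2 * m by rewrite leq_mul2r hb orbT.
rewrite mulSn; lia.
Qed.

Lemma edge_cases e : e < size es ->
  [\/ e < N,
      exists b q c, [/\ b < N.*2, q < k, c < 2 & e = N + b * m + (q.*2 + c)] |
      exists2 b, b < N.*2 & e = N + b * m + k.*2].
Proof.
rewrite size_es // => he.
have [hN|hN] := ltnP e N; first by constructor 1.
set b := (e - N) %/ m; set r := (e - N) %% m.
have hd : e - N = b * m + r by rewrite /b /r -divn_eq.
have hr : r < m by rewrite /r ltn_pmod.
have hb : b < N.*2 by rewrite /b ltn_divLR //; lia.
have [hr2|hr2] := ltnP r k.*2.
  constructor 2; exists b, (r %/ 2), (r %% 2); split => //; try lia.
constructor 3; exists b => //; lia.
Qed.

Lemma pK_P e : e < N -> pK e.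
Proof. by rewrite /pK => ->. Qed.

Lemma pK_D b q c : q < k -> c < 2 -> pK (N + b * m + (q.*2 + c)) = (c == 0).
Proof.
move=> hq hc; rewrite /pK.
have -> : (N + b * m + (q.*2 + c) < N) = false by lia.
have -> : N + b * m + (q.*2 + c) - N = b * m + (q.*2 + c) by lia.
rewrite /= modnMDl modn_small; last by lia.
have -> : q.*2 + c < k.*2 by lia.
case: c hc => [|[|c]] //= _; lia.
Qed.

Lemma pK_S b : pK (N + b * m + k.*2) = false.
Proof.
rewrite /pK.
have -> : (N + b * m + k.*2 < N) = false by lia.
have -> : N + b * m + k.*2 - N = b * m + k.*2 by lia.
by rewrite /= modnMDl modn_small ?ltnn.
Qed.

Lemma vert_cases x : x < n -> x < k \/ exists b i, [/\ b < N.*2, i <= k & x = lab k b i].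
Proof.
rewrite /pf_nverts => hx.
have [hlt|hge] := ltnP x k; first by left.
right; exists ((x - k) %/ k.+1), ((x - k) %% k.+1); split.
- rewrite ltn_divLR //; lia.
- by rewrite -ltnS ltn_pmod.
- rewrite /lab; have := divn_eq (x - k) k.+1; lia.
Qed.

End Conc.


Section Comps.
Variable k : nat.
Hypothesis hk : 2 <= k.
Local Notation N := k.-1.
Local Notation m := k.*2.+1.
Local Notation es := (pf_edges k).
Local Notation n := (pf_nverts k).

Lemma e0_lt : 0 < size es.
Proof. have h := blk_lt hk (b:=0) (r:=0). have h1 : 0 < N.*2 by lia. have h2 := h h1 (ltn0Sn _). lia. Qed.

Definition e0 : 'I_(size es) := Ordinal e0_lt.

Lemma compK_P (x : 'I_n) : x < k ->
  is_path_graph (Defs.comp [set e : 'I_(size es) | pK k e] x)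
                (comp_edges [set e : 'I_(size es) | pK k e] x)
  /\ #|comp_edges [set e : 'I_(size es) | pK k e] x| = N.
Proof.
move=> hx.
apply: (@path_comp n es (pK k) x e0 N id id).
- move=> i hi; rewrite /pf_nverts; lia.
- move=> i hi; rewrite size_es /=; exact: (leq_trans hi (leq_addr _ _)).
- by [].
- by [].
- by exists (nat_of_ord x) => //=; lia.
- by move=> i hi; apply: pK_P.
- move=> i hi; rewrite ends_P //= /joinsp eqxx //.
- move=> e i he hpk hi /= hinc; case: (edge_cases hk he).
  + by move=> heN; exists e.
  + move=> [b [q [c [hb hq hc ee]]]]; subst e.
    rewrite (ends_D hk) //= in hinc.
    have := lab_ge hk b q; have := lab_ge hk b q.+1.
    move: hinc; clear -hi hk; case/orP => /eqP; lia.
  + by move=> [b hb ee]; subst e; rewrite (pK_S hk) in hpk.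
Qed.

Lemma compK_B (x : 'I_n) b i0 : b < N.*2 -> i0 <= k -> val x = lab k b i0 ->
  is_path_graph (Defs.comp [set e : 'I_(size es) | pK k e] x)
                (comp_edges [set e : 'I_(size es) | pK k e] x)
  /\ #|comp_edges [set e : 'I_(size es) | pK k e] x| = k.
Proof.
move=> hb hi0 hx.
apply: (@path_comp n es (pK k) x e0 k (lab k b) (fun i => N + b * m + (i.*2 + 0))).
- by move=> i hi; apply: (lab_lt hk).
- move=> i hi; apply: (blk_lt hk) => //; lia.
- by move=> i j hi hj /(lab_inj hk) [] // _.
- by move=> i j hi hj /(blk_inj hk) [] //; lia.
- by exists i0.
- by move=> i hi; rewrite (pK_D hk).
- move=> i hi; rewrite (ends_D hk) //= /joinsp eqxx //.
- move=> e i he hpk hi /= hinc; case: (edge_cases hk he).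
  + move=> heN; rewrite ends_P //= in hinc.
    have := lab_ge hk b i; move: hinc; clear -heN; case/orP => /eqP; lia.
  + move=> [b' [q [c [hb' hq hc ee]]]]; subst e.
    rewrite (pK_D hk) // in hpk; move/eqP: hpk => ?; subst c.
    rewrite (ends_D hk) //= in hinc.
    exists q => //.
    case/orP: hinc => /eqP /(lab_inj hk) [] //; try lia; by move=> -> _.
  + by move=> [b' hb' ee]; subst e; rewrite (pK_S hk) in hpk.
Qed.

End Comps.


Section CompJ.
Variable k : nat.
Hypothesis hk : 2 <= k.
Variable j : nat.
Hypothesis hj : j < k.-1.
Local Notation N := k.-1.
Local Notation m := k.*2.+1.
Local Notation es := (pf_edges k).
Local Notation n := (pf_nverts k).

Definition svj i := if i <= k then lab k (j.*2) i else if i == k.+1 then j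
                    else lab k (j.*2.+1) (k.*2.+2 - i).
Definition tej i := if i < k then N + j.*2 * m + (i.*2 + 1)
   else if i == k then N + j.*2 * m + k.*2
   else if i == k.+1 then N + j.*2.+1 * m + k.*2
   else N + j.*2.+1 * m + ((k.*2.+1 - i).*2 + 1).

Lemma sv_case i : i <= k.*2.+2 ->
  [\/ i <= k /\ svj i = lab k (j.*2) i, i = k.+1 /\ svj i = j |
      [/\ k.+2 <= i, k.*2.+2 - i <= k & svj i = lab k (j.*2.+1) (k.*2.+2 - i)]].
Proof.
move=> hi; rewrite /svj.
case: ifP => h1; first by constructor 1.
case: ifP => h2; first by constructor 2; split => //; apply/eqP.
constructor 3; split => //; lia.
Qed.

Lemma te_case i : i < k.*2.+2 ->
  [\/ i < k /\ tej i = N + j.*2 * m + (i.*2 + 1),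
      i = k /\ tej i = N + j.*2 * m + k.*2,
      i = k.+1 /\ tej i = N + j.*2.+1 * m + k.*2 |
      [/\ k.+2 <= i, k.*2.+1 - i < k & tej i = N + j.*2.+1 * m + ((k.*2.+1 - i).*2 + 1)]].
Proof.
move=> hi; rewrite /tej.
case: ifP => h1; first by constructor 1.
case: ifP => h2; first by constructor 2; split => //; apply/eqP.
case: ifP => h3; first by constructor 3; split => //; apply/eqP.
constructor 4; split => //; lia.
Qed.

Lemma lab_inj' b b' i i' : lab k b i = lab k b' i' -> i <= k -> i' <= k -> b = b' /\ i = i'.
Proof. by move=> h hi hi'; apply: (lab_inj hk). Qed.

Lemma blk_inj' b b' r r' : N + b * m + r = N + b' * m + r' -> r < m -> r' < m -> b = b' /\ r = r'.
Proof. by move=> h hi hi'; apply: (blk_inj hk). Qed.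

Lemma sv_lt i : i <= k.*2.+2 -> svj i < n.
Proof.
case/sv_case => [[h ->]|[h ->]|[h1 h2 ->]].
- apply: (lab_lt hk) => //; lia.
- apply: (leq_trans hj); rewrite /pf_nverts; exact: leq_trans (leq_pred k) (leq_addr _ _).
- apply: (lab_lt hk) => //; lia.
Qed.

Lemma te_lt i : i < k.*2.+2 -> tej i < size es.
Proof.
case/te_case => [[h ->]|[h ->]|[h ->]|[h1 h2 ->]]; apply: (blk_lt hk); lia.
Qed.

Lemma sv_inj i1 i2 : i1 <= k.*2.+2 -> i2 <= k.*2.+2 -> svj i1 = svj i2 -> i1 = i2.
Proof.
move=> h1 h2.
have g1 := lab_ge hk (j.*2) i1; have g2 := lab_ge hk (j.*2) i2.
have g3 := lab_ge hk (j.*2.+1) (k.*2.+2 - i1); have g4 := lab_ge hk (j.*2.+1) (k.*2.+2 - i2).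
case: (sv_case h1) => [[a1 ->]|[a1 ->]|[a1 b1 ->]];
case: (sv_case h2) => [[a2 ->]|[a2 ->]|[a2 b2 ->]] => h;
  try (case: (lab_inj' h) => //; lia); lia.
Qed.

Lemma te_inj i1 i2 : i1 < k.*2.+2 -> i2 < k.*2.+2 -> tej i1 = tej i2 -> i1 = i2.
Proof.
move=> h1 h2.
case: (te_case h1) => [[a1 ->]|[a1 ->]|[a1 ->]|[a1 b1 ->]];
case: (te_case h2) => [[a2 ->]|[a2 ->]|[a2 ->]|[a2 b2 ->]] => h;
  case: (blk_inj' h) => //; lia.
Qed.

Lemma te_notK i : i < k.*2.+2 -> ~~ pK k (tej i).
Proof.
case/te_case => [[h ->]|[h ->]|[h ->]|[h1 h2 ->]];
  rewrite ?(pK_S hk) ?(pK_D hk) //; lia.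
Qed.

Lemma tej_lo q : q < k -> tej q = N + j.*2 * m + (q.*2 + 1).
Proof. by move=> h; rewrite /tej h. Qed.
Lemma tej_k : tej k = N + j.*2 * m + k.*2.
Proof. by rewrite /tej ltnn eqxx. Qed.
Lemma tej_k1 : tej k.+1 = N + j.*2.+1 * m + k.*2.
Proof. by rewrite /tej ltnNge leqnSn /= (_ : (k.+1 == k) = false) ?eqxx //; lia. Qed.
Lemma tej_hi q : q < k -> tej (k.*2.+1 - q) = N + j.*2.+1 * m + (q.*2 + 1).
Proof.
move=> h; rewrite /tej.
have -> : (k.*2.+1 - q < k) = false by lia.
have -> : (k.*2.+1 - q == k) = false by apply/eqP; lia.
have -> : (k.*2.+1 - q == k.+1) = false by apply/eqP; lia.
have -> : k.*2.+1 - (k.*2.+1 - q) = q by lia.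
done.
Qed.

Lemma jp1 p a b : p = (a, b) -> joinsp p a b.
Proof. by move=> ->; rewrite /joinsp eqxx. Qed.
Lemma jp2 p a b : p = (b, a) -> joinsp p a b.
Proof. by move=> ->; rewrite /joinsp eqxx orbT. Qed.

Lemma te_join i : i < k.*2.+2 -> joinsp (nth (0,0) es (tej i)) (svj i) (svj i.+1).
Proof.
move=> hi; case/te_case: (hi) => [[h ->]|[h ->]|[h ->]|[h1 h2 ->]].
- apply: jp1; rewrite (ends_D hk) //; last by lia.
  rewrite /svj h.
  have -> : (i <= k) = true by lia.
  done.
- subst i; apply: jp1; rewrite (ends_S hk); last by lia.
  rewrite /svj leqnn ltnn eqxx; congr pair; lia.
- subst i; apply: jp2; rewrite (ends_S hk); last by lia.
  rewrite /svj ltnn eqxx (_ : k.+2 <= k = false); last by lia.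
  rewrite (_ : (k.+2 == k.+1) = false); last by lia.
  congr pair; [congr lab; lia | lia].
- apply: jp2; rewrite (ends_D hk) //; try lia.
  rewrite /svj (_ : i <= k = false); last by lia.
  rewrite (_ : i.+1 <= k = false); last by lia.
  rewrite (_ : (i == k.+1) = false); last by lia.
  rewrite (_ : (i.+1 == k.+1) = false); last by lia.
  congr pair; congr lab; lia.
Qed.

Lemma te_clos e i : e < size es -> ~~ pK k e -> i <= k.*2.+2 ->
  ((nth (0,0) es e).1 == svj i) || ((nth (0,0) es e).2 == svj i) ->
  exists2 i', i' < k.*2.+2 & tej i' = e.
Proof.
move=> he hpk hi hinc.
case: (edge_cases hk he).
- by move=> /pK_P h; rewrite h in hpk.
- move=> [b [q [c [hb hq hc ee]]]]; subst e.
  rewrite (pK_D hk) // in hpk.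
  have c1 : c = 1 by lia.
  subst c; rewrite (ends_D hk) //= in hinc.
  have [q' [hq' hv]] : exists q', q' <= k /\ lab k b q' = svj i.
    by case/orP: hinc => /eqP hv; [exists q | exists q.+1]; split => //; lia.
  have g := lab_ge hk b q'.
  case: (sv_case hi) => [[a1 e1]|[a1 e1]|[a1 b1 e1]]; rewrite e1 in hv.
  + have [hb2 _] := lab_inj' hv hq' a1; subst b.
    by exists q; [lia | rewrite tej_lo].
  + lia.
  + have [hb2 _] := lab_inj' hv hq' b1; subst b.
    by exists (k.*2.+1 - q); [lia | rewrite tej_hi].
- move=> [b hb ee]; subst e.
  rewrite (ends_S hk) //= in hinc.
  have [hbj|hbj] : b = j.*2 \/ b = j.*2.+1.
    + case/orP: hinc => /eqP hv.
        have g := lab_ge hk b k.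
        case: (sv_case hi) => [[a1 e1]|[a1 e1]|[a1 b1 e1]]; rewrite e1 in hv.
        * by left; case: (lab_inj' hv (leqnn k) a1).
        * lia.
        * by right; case: (lab_inj' hv (leqnn k) b1).
      have g1 := lab_ge hk (j.*2) i; have g2 := lab_ge hk (j.*2.+1) (k.*2.+2 - i).
      case: (sv_case hi) => [[a1 e1]|[a1 e1]|[a1 b1 e1]]; rewrite e1 in hv; lia.
  + by subst b; exists k; [lia | rewrite tej_k].
  + by subst b; exists k.+1; [lia | rewrite tej_k1].
Qed.

Lemma compI_J (x : 'I_n) : (exists2 i, i <= k.*2.+2 & svj i = x) ->
  is_path_graph (Defs.comp [set e : 'I_(size es) | ~~ pK k e] x)
                (comp_edges [set e : 'I_(size es) | ~~ pK k e] x).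
Proof.
move=> hx.
have := @path_comp n es (fun e => ~~ pK k e) x (e0 hk) (k.*2.+2) svj tej
  sv_lt te_lt sv_inj te_inj hx te_notK te_join te_clos.
by case.
Qed.

End CompJ.


Section Exist.
Variable k : nat.
Hypothesis hk : 2 <= k.
Local Notation N := k.-1.
Local Notation m := k.*2.+1.
Local Notation es := (pf_edges k).
Local Notation n := (pf_nverts k).

Lemma compI_w (x : 'I_n) : val x = N ->
  is_path_graph (Defs.comp [set e : 'I_(size es) | ~~ pK k e] x)
                (comp_edges [set e : 'I_(size es) | ~~ pK k e] x).
Proof.
move=> hx.
have := @path_comp n es (fun e => ~~ pK k e) x (e0 hk) 0 (fun _ => N) (fun _ => 0).
case.
- move=> i _; rewrite -hx; exact: ltn_ord.
- by [].
- by move=> i j; case: i; case: j.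
- by [].
- by exists 0.
- by [].
- by [].
- move=> e i he hpk hi hinc; exfalso.
  case: (edge_cases hk he).
  + by move=> /pK_P h; rewrite h in hpk.
  + move=> [b [q [c [hb hq hc ee]]]]; subst e.
    rewrite (pK_D hk) // in hpk.
    rewrite (ends_D hk) //= in hinc.
    have := lab_ge hk b q; have := lab_ge hk b q.+1.
    move: hinc; clear -hk; case/orP => /eqP; lia.
  + move=> [b hb ee]; subst e.
    rewrite (ends_S hk) //= in hinc.
    have := lab_ge hk b k.
    move: hinc hb; clear -hk; case/orP => /eqP; lia.
- by [].
Qed.

Lemma existence : exists Finf Fk : {set 'I_(size es)}, inf_k_decomposition n k Finf Fk.
Proof.
exists [set e : 'I_(size es) | ~~ pK k e], [set e : 'I_(size es) | pK k e]; split.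
- by apply/setP => e; rewrite !inE orNb.
- by apply/setP => e; rewrite !inE andNb.
- move=> x; case: (vert_cases hk (ltn_ord x)).
  + move=> hx.
    have [hN|hN] := eqVneq (nat_of_ord x) N; first exact: compI_w.
    apply: (@compI_J k hk x); first lia.
    exists k.+1; first lia.
    by rewrite /svj ltnn eqxx.
  + move=> [b [i [hb hi hx]]].
    have hj : b %/ 2 < N by lia.
    apply: (compI_J hk hj).
    have [hb2|hb2] : b = (b %/ 2).*2 \/ b = (b %/ 2).*2.+1 by lia.
    * exists i; first lia.
      by rewrite /svj hi hx -hb2.
    * exists (k.*2.+2 - i); first lia.
      rewrite /svj (_ : k.*2.+2 - i <= k = false); last by lia.
      rewrite (_ : (k.*2.+2 - i == k.+1) = false); last by apply/eqP; lia.
      rewrite hx -hb2; congr lab; lia.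
- split.
  + move=> x; case: (vert_cases hk (ltn_ord x)).
      by move=> hx; case: (compK_P hk hx).
    by move=> [b [i [hb hi hx]]]; case: (compK_B hk hb hi hx).
  + move=> x; case: (vert_cases hk (ltn_ord x)).
      by move=> hx; case: (compK_P hk hx) => _ ->; exact: leq_pred.
    by move=> [b [i [hb hi hx]]]; case: (compK_B hk hb hi hx) => _ ->.
Qed.

End Exist.


Lemma ex_ord p v : v < p -> exists x : 'I_p, val x = v.
Proof. by move=> h; exists (Ordinal h). Qed.

Lemma card_lb (I : finType) (T : eqType) (A : {set I}) (f : I -> T) (Q : seq T) :
  uniq Q -> (forall q, q \in Q -> exists2 e, e \in A & f e = q) -> size Q <= #|A|.
Proof.
move=> uQ hQ; rewrite cardE -(size_map f (enum A)).
apply: uniq_leq_size => // q /hQ [e he <-].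
by apply: map_f; rewrite mem_enum.
Qed.

Section Nec.
Variable k : nat.
Hypothesis hk : 2 <= k.
Local Notation N := k.-1.
Local Notation m := k.*2.+1.
Local Notation es := (pf_edges k).
Local Notation n := (pf_nverts k).
Variables Finf Fk : {set 'I_(size es)}.
Hypothesis hD : inf_k_decomposition n k Finf Fk.

Lemma inFk (e : 'I_(size es)) : e \notin Finf -> e \in Fk.
Proof.
case: hD => hU _ _ _ he.
have : e \in Finf :|: Fk by rewrite hU inE.
by rewrite inE (negbTE he).
Qed.

Lemma single_inf b (ed : 'I_(size es)) : b < N.*2 -> val ed = N + b * m + k.*2 -> ed \in Finf.
Proof.
move=> hb hed; apply/negPn/negP => hn.
have hedk := inFk hn.
case: hD => _ _ hLinf [hLk hBk].
have [v0 hv0] := ex_ord (lab_lt hk hb (leq0n k)).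
pose vx z := insubd v0 z.
have vxE : forall i, i <= k -> val (vx (lab k b i)) = lab k b i.
  by move=> i hi; rewrite /vx val_insubd (lab_lt hk hb hi).
have fk : forall i, i < k -> exists2 a, a \in Fk & ends a = (lab k b i, lab k b i.+1).
  move=> i hi.
  have [a0 ha0] := ex_ord (blk_lt hk (r := i.*2 + 0) hb ltac:(lia)).
  have [a1 ha1] := ex_ord (blk_lt hk (r := i.*2 + 1) hb ltac:(lia)).
  have e0 : ends a0 = (lab k b i, lab k b i.+1) by rewrite /ends ha0 (ends_D hk).
  have e1 : ends a1 = (lab k b i, lab k b i.+1) by rewrite /ends ha1 (ends_D hk).
  have [f0|f0] := boolP (a0 \in Finf); last by exists a0 => //; exact: inFk.
  have [f1|f1] := boolP (a1 \in Finf); last by exists a1 => //; exact: inFk.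
  exfalso; apply: (lf_par (x := vx (lab k b i)) hLinf f0 f1); first by rewrite e0 e1.
    by rewrite /incident e0 vxE ?eqxx // ltnW.
  apply/eqP => h; have := congr1 val h; rewrite ha0 ha1 => /(blk_inj hk) []; lia.
have incomp : forall i, i <= k -> vx (lab k b i) \in Defs.comp Fk v0.
  elim=> [|i IH] hi.
    have -> : vx (lab k b 0) = v0 by apply: val_inj; rewrite vxE.
    rewrite inE; exact: connect0.
  have hi1 : i <= k by apply: ltnW.
  have c1 := IH hi1; rewrite inE in c1; rewrite inE.
  apply: (connect_trans c1); apply: connect1.
  have [a ha ea] := fk i hi; apply/existsP; exists a.
  rewrite ha ea (vxE _ hi1) (vxE _ hi); by rewrite /joinsp eqxx.
pose Q := [seq (lab k b i, if i == k then b %/ 2 else lab k b i.+1) | i <- iota 0 k.+1].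
have uQ : uniq Q.
  rewrite map_inj_in_uniq ?iota_uniq // => i1 i2; rewrite !mem_iota !add0n => h1 h2 [h _].
  by case: (lab_inj hk (i:=i1) (i':=i2) ltac:(lia) ltac:(lia) h).
have := @card_lb _ _ (comp_edges Fk v0) (@ends es) Q uQ.
rewrite size_map size_iota.
have hB := hBk v0.
suff : (forall q, q \in Q -> exists2 e, e \in comp_edges Fk v0 & ends e = q).
  move=> H /(_ H); lia.
move=> q /mapP [i]; rewrite mem_iota add0n => /andP [_ hi] ->.
have [hik|hik] := eqVneq i k.
  subst i; exists ed; last by rewrite /ends hed (ends_S hk) // eqxx.
  rewrite inE hedk /=; apply/existsP; exists (vx (lab k b k)).
  rewrite (incomp _ (leqnn k)) /= /incident /ends hed (ends_S hk) //= (vxE _ (leqnn k)).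
  by rewrite eqxx.
have hi' : i < k by lia.
have [a ha ea] := fk i hi'; exists a; last exact: ea.
have hi1 : i <= k by apply: ltnW.
rewrite inE ha /=; apply/existsP; exists (vx (lab k b i)).
by rewrite (incomp _ hi1) /= /incident ea (vxE _ hi1) eqxx.
Qed.

Lemma p_claim j (e : 'I_(size es)) : j < N -> e \in Finf -> incident e j ->
  val e = N + j.*2 * m + k.*2 \/ val e = N + j.*2.+1 * m + k.*2.
Proof.
move=> hj he hinc.
have hb0 : j.*2 < N.*2 by lia.
have hb1 : j.*2.+1 < N.*2 by lia.
have [s0 hs0] := ex_ord (blk_lt hk (r := k.*2) hb0 (ltnSn _)).
have [s1 hs1] := ex_ord (blk_lt hk (r := k.*2) hb1 (ltnSn _)).
have f0 := single_inf hb0 hs0; have f1 := single_inf hb1 hs1.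
have hjn : j < n by rewrite /pf_nverts; lia.
have [x hx] := ex_ord hjn.
have i0 : incident s0 x.
  rewrite /incident /ends hs0 (ends_S hk) //= hx.
  apply/orP; right; apply/eqP; lia.
have i1 : incident s1 x.
  rewrite /incident /ends hs1 (ends_S hk) //= hx.
  apply/orP; right; apply/eqP; lia.
have ie : incident e x by rewrite hx.
have d01 : s0 != s1.
  apply/eqP => h; have := congr1 val h; rewrite hs0 hs1 => /(blk_inj hk) []; lia.
case: hD => _ _ hLinf _.
have [h0|h0] := eqVneq s0 e; first by left; rewrite -h0.
have [h1|h1] := eqVneq s1 e; first by right; rewrite -h1.
exfalso; exact: (lf_deg3 hLinf f0 f1 he i0 i1 ie d01 h0 h1).
Qed.

Lemma necessity : degF Finf (pf_tip k) = 0 /\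
  (forall e : 'I_(size es), ends e \in pf_P_edges k -> e \in Fk).
Proof.
split.
  apply/eqP; rewrite cards_eq0; apply/eqP/setP => e; rewrite !inE.
  apply/negbTE/negP => /andP [he hinc].
  move: hinc; rewrite /incident /pf_tip /ends.
  case: (edge_cases hk (ltn_ord e)).
  - move=> heN; rewrite (ends_P heN) /= => hinc.
    have ej : nat_of_ord e = N.-1 by move: hinc heN; clear; case/orP => /eqP; lia.
    have hj : N.-1 < N by lia.
    have hi2 : incident e N.-1 by rewrite /incident /ends (ends_P heN) /= ej eqxx.
    case: (p_claim hj he hi2) => h; move: heN; rewrite h; lia.
  - move=> [b [q [c [hb hq hc ee]]]]; rewrite ee (ends_D hk) //=.
    have g1 := lab_ge hk b q; have g2 := lab_ge hk b q.+1.
    move: g1 g2; clear -hk => g1 g2; case/orP => /eqP; lia.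
  - move=> [b hb ee]; rewrite ee (ends_S hk) //=.
    have g1 := lab_ge hk b k.
    move: g1 hb; clear -hk => g1 hb; case/orP => /eqP; lia.
move=> e /mapP [j]; rewrite mem_iota add0n => /andP [_ hj] hee.
apply: inFk; apply/negP => he.
have hinc : incident e j by rewrite /incident hee /= eqxx.
have g := lab_ge hk (j.*2) k; have g' := lab_ge hk (j.*2.+1) k.
case: (p_claim hj he hinc) => h; move: hee; rewrite /ends h (ends_S hk); try lia; case=> ee _; lia.
Qed.

End Nec.


Theorem proposition13 (k : nat) (hk : 2 <= k) :
  (exists Finf Fk : {set 'I_(size (pf_edges k))},
      inf_k_decomposition (pf_nverts k) k Finf Fk) /\
  (forall Finf Fk : {set 'I_(size (pf_edges k))},
      inf_k_decomposition (pf_nverts k) k Finf Fk ->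
      degF Finf (pf_tip k) = 0 /\
      (forall e : 'I_(size (pf_edges k)),
          ends e \in pf_P_edges k -> e \in Fk)).
Proof.
split; first exact: (existence hk).
move=> Finf Fk hD; exact: (necessity hk hD).
Qed.
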